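(* Let $X$ be a continuous vector field on $\mathbb{S}^1$. Then for any $A\in\mathrm{O}_0(1,2)$ and $v\in\mathbb{R}^{1,2}$, $w(A_*X+\Lambda(v))=w(X)$.
   Context: $\mathbb{R}^{1,2}$ is $\mathbb{R}^3$ with $\langle x,y\rangle=-x_0y_0+x_1y_1+x_2y_2$; $\mathrm{O}_0(1,2)$ is the identity component of its linear isometry group, acting on $\overline{\mathbb{D}^2}$ by $A\cdot\eta=\Pi(A(1,\eta))$, $\Pi(x_0,x_1,x_2)=(x_1/x_0,x_2/x_0)$; $A_*X$ is the pushforward of $X$ by $z\mapsto A\cdot z$ on $\mathbb{S}^1$. $\Lambda(v)$ is the Killing field (extended to $\mathbb{S}^1$) $\eta\mapsto\mathrm{d}_{(1,\eta)}\Pi((1,\eta)\boxtimes v)$, where $\langle x\boxtimes y,u\rangle=\det(x,y,u)$. A vector field $Y$ on $\mathbb{S}^1$ is $Y(z)=iz\phi_Y(z)$. $\phi_Y^-(\eta)=\sup\{a(\eta):a\text{ affine},a|_{\mathbb{S}^1}\le\phi_Y\}$, $\phi_Y^+(\eta)=\inf\{a(\eta):a\text{ affine},a|_{\mathbb{S}^1}\ge\phi_Y\}$. Width: $w(Y)=\sup_{\eta\in\mathbb{D}^2}\frac{\phi_Y^+(\eta)-\phi_Y^-(\eta)}{\sqrt{1-|\eta|^2}}\in[0,+\infty]$. *)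

(* Defs.v *)
From HB Require Import structures.
From mathcomp Require Import all_boot all_order all_algebra.
From mathcomp Require Import all_classical all_reals all_analysis.
Set Implicit Arguments. Unset Strict Implicit. Unset Printing Implicit Defensive.
Import Order.TTheory GRing.Theory Num.Theory.
Import numFieldNormedType.Exports.
Local Open Scope classical_set_scope.
Local Open Scope ring_scope.

Section Defs.
Variable R : realType.

(* Points / tangent vectors of R^2 are pairs; vectors of R^{1,2} are 'cV[R]_3. *)
Definition vec3 (a b c : R) : 'cV[R]_3 := \col_(i < 3) [:: a; b; c]`_i.
Definition c0 (x : 'cV[R]_3) : R := x ord0 ord0.
Definition c1 (x : 'cV[R]_3) : R := x (inord 1) ord0.
Definition c2 (x : 'cV[R]_3) : R := x (inord 2) ord0.

Definition mink (x y : 'cV[R]_3) : R := - c0 x * c0 y + c1 x * c1 y + c2 x * c2 y.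

(* O_0(1,2): the identity component of the isometry group of the form,
   i.e. SO^+(1,2): isometries with det 1 preserving the future cone (A_00 > 0). *)
Definition O0_12 (A : 'M[R]_3) : Prop :=
  [/\ forall x y : 'cV[R]_3, mink (A *m x) (A *m y) = mink x y,
      \det A = 1 & 0 < A ord0 ord0].

(* x ⊠ y : the unique vector with <x ⊠ y, u> = det(x,y,u) (written out). *)
Definition boxtimes (x y : 'cV[R]_3) : 'cV[R]_3 :=
  vec3 (- (c1 x * c2 y - c2 x * c1 y))
       (c2 x * c0 y - c0 x * c2 y)
       (c0 x * c1 y - c1 x * c0 y).

Definition Pi (x : 'cV[R]_3) : R * R := (c1 x / c0 x, c2 x / c0 x).
Definition dPi (x u : 'cV[R]_3) : R * R :=
  ((c1 u * c0 x - c1 x * c0 u) / (c0 x ^+ 2),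
   (c2 u * c0 x - c2 x * c0 u) / (c0 x ^+ 2)).

Definition lift (eta : R * R) : 'cV[R]_3 := vec3 1 eta.1 eta.2.

Definition act (A : 'M[R]_3) (eta : R * R) : R * R := Pi (A *m lift eta).
(* differential of eta |-> A . eta at eta applied to u (chain rule) *)
Definition Dact (A : 'M[R]_3) (eta u : R * R) : R * R :=
  dPi (A *m lift eta) (A *m vec3 0 u.1 u.2).

Definition sqnorm (z : R * R) : R := z.1 ^+ 2 + z.2 ^+ 2.
Definition S1 : set (R * R) := [set z | sqnorm z = 1].
Definition D2 : set (R * R) := [set z | sqnorm z < 1].

(* vector fields: maps z |-> Y z (only values on S1 are relevant) *)
Definition vfield := R * R -> R * R.

Definition vf_push (A : 'M[R]_3) (X : vfield) : vfield :=
  fun w => let z := act (invmx A) w in Dact A z (X z).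

Definition Killing (v : 'cV[R]_3) : vfield :=
  fun eta => dPi (lift eta) (boxtimes (lift eta) v).

Definition vf_add (X Y : vfield) : vfield :=
  fun z => ((X z).1 + (Y z).1, (X z).2 + (Y z).2).

Definition tangent (Y : vfield) : Prop :=
  forall z, S1 z -> (Y z).1 * z.1 + (Y z).2 * z.2 = 0.

(* phi_Y with Y(z) = i z phi_Y(z): for tangent Y and |z| = 1,
   phi_Y(z) = <Y(z), iz> where iz = (-z2, z1). *)
Definition phi (Y : vfield) (z : R * R) : R := - (Y z).1 * z.2 + (Y z).2 * z.1.

Definition aff (a : R * R * R) (eta : R * R) : R := a.1.1 + a.1.2 * eta.1 + a.2 * eta.2.

Definition phi_minus (Y : vfield) (eta : R * R) : \bar R :=
  ereal_sup [set (aff a eta)%:E | a in [set a | forall z, S1 z -> aff a z <= phi Y z]].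
Definition phi_plus (Y : vfield) (eta : R * R) : \bar R :=
  ereal_inf [set (aff a eta)%:E | a in [set a | forall z, S1 z -> phi Y z <= aff a z]].

Definition vf_width (Y : vfield) : \bar R :=
  ereal_sup [set ((phi_plus Y eta - phi_minus Y eta) * ((Num.sqrt (1 - sqnorm eta))^-1)%:E)%E
            | eta in D2].

End Defs.

(* Main.v *)
Require Import Defs.
From mathcomp Require Import all_boot all_order all_algebra ring lra.
From mathcomp Require Import all_classical all_reals all_analysis.
Import Order.TTheory GRing.Theory Num.Theory.
Import numFieldNormedType.Exports.
Local Open Scope classical_set_scope.
Local Open Scope ring_scope.
Lemma det33 (R : comNzRingType) (M : 'M[R]_3) :
  \det M = M 0 0 * (M 1 1 * M 2 2 - M 1 2 * M 2 1)
         - M 0 1 * (M 1 0 * M 2 2 - M 1 2 * M 2 0)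
         + M 0 2 * (M 1 0 * M 2 1 - M 1 1 * M 2 0).
Proof.
rewrite (expand_det_row M 0) !big_ord_recl big_ord0 /cofactor.
rewrite !(expand_det_row _ 0) !big_ord_recl !big_ord0 /cofactor.
rewrite !(expand_det_row _ 0) !big_ord_recl !big_ord0 /cofactor !det_mx00 !mxE /=.
set g := fun i j : nat => M (inord i) (inord j).
have HM : forall i j : 'I_3, M i j = g i j by move=> i j; rewrite /g !inord_val.
rewrite !HM /= /bump /=.
rewrite !expr0 !expr1. ring.
Qed.

Section G.
Variable R : realType.
Implicit Types (x y p q r : 'cV[R]_3).

Lemma c0E (a b c : R) : c0 (vec3 a b c) = a. Proof. by rewrite /c0 /vec3 mxE. Qed.
Lemma c1E (a b c : R) : c1 (vec3 a b c) = b. Proof. by rewrite /c1 /vec3 mxE inordK. Qed.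
Lemma c2E (a b c : R) : c2 (vec3 a b c) = c. Proof. by rewrite /c2 /vec3 mxE inordK. Qed.
Lemma c0D x y : c0 (x + y) = c0 x + c0 y. Proof. by rewrite /c0 mxE. Qed.
Lemma c1D x y : c1 (x + y) = c1 x + c1 y. Proof. by rewrite /c1 mxE. Qed.
Lemma c2D x y : c2 (x + y) = c2 x + c2 y. Proof. by rewrite /c2 mxE. Qed.
Lemma c0N x : c0 (- x) = - c0 x. Proof. by rewrite /c0 mxE. Qed.
Lemma c1N x : c1 (- x) = - c1 x. Proof. by rewrite /c1 mxE. Qed.
Lemma c2N x : c2 (- x) = - c2 x. Proof. by rewrite /c2 mxE. Qed.
Lemma c0Z k x : c0 (k *: x) = k * c0 x. Proof. by rewrite /c0 mxE. Qed.
Lemma c1Z k x : c1 (k *: x) = k * c1 x. Proof. by rewrite /c1 mxE. Qed.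
Lemma c2Z k x : c2 (k *: x) = k * c2 x. Proof. by rewrite /c2 mxE. Qed.
Definition cE := (c0E, c1E, c2E, c0D, c1D, c2D, c0N, c1N, c2N, c0Z, c1Z, c2Z).

Lemma vec3_ext x y : c0 x = c0 y -> c1 x = c1 y -> c2 x = c2 y -> x = y.
Proof.
move=> h0 h1 h2; apply/matrixP => i j; rewrite (ord1 j).
case: i => [[|[|[|//]]] Hi].
- by have -> : Ordinal Hi = ord0 by apply/val_inj.
- by have -> : Ordinal Hi = inord 1 by apply/val_inj; rewrite /= inordK.
- by have -> : Ordinal Hi = inord 2 by apply/val_inj; rewrite /= inordK.
Qed.

Definition eA (A : 'M[R]_3) (i j : nat) : R := A (inord i) (inord j).
Definition ex x (i : nat) : R := x (inord i) ord0.
Lemma eAE (A : 'M[R]_3) (i j : 'I_3) : A i j = eA A i j.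
Proof. by rewrite /eA !inord_val. Qed.
Lemma exE x (i : 'I_3) : x i ord0 = ex x i.
Proof. by rewrite /ex !inord_val. Qed.
Lemma cx x : (c0 x = ex x 0) * (c1 x = ex x 1) * (c2 x = ex x 2).
Proof.
rewrite /c0 /c1 /c2 /ex; split; [split|] => //.
by congr (x _ _); apply/val_inj; rewrite /= inordK.
Qed.

Ltac normo := rewrite /= /bump /= ?addn0 ?add1n.

Lemma cM0 (A : 'M[R]_3) x : c0 (A *m x) = eA A 0 0 * c0 x + eA A 0 1 * c1 x + eA A 0 2 * c2 x.
Proof.
rewrite {1}/c0 mxE !big_ord_recl big_ord0 !eAE !exE; normo; rewrite ?inordK //; by rewrite !cx addr0 !addrA.
Qed.
Lemma cM1 (A : 'M[R]_3) x : c1 (A *m x) = eA A 1 0 * c0 x + eA A 1 1 * c1 x + eA A 1 2 * c2 x.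
Proof.
rewrite {1}/c1 mxE !big_ord_recl big_ord0 !eAE !exE; normo; rewrite ?inordK //; by rewrite !cx addr0 !addrA.
Qed.
Lemma cM2 (A : 'M[R]_3) x : c2 (A *m x) = eA A 2 0 * c0 x + eA A 2 1 * c1 x + eA A 2 2 * c2 x.
Proof.
rewrite {1}/c2 mxE !big_ord_recl big_ord0 !eAE !exE; normo; rewrite ?inordK //; by rewrite !cx addr0 !addrA.
Qed.

Lemma detE (A : 'M[R]_3) : \det A = eA A 0 0 * (eA A 1 1 * eA A 2 2 - eA A 1 2 * eA A 2 1)
         - eA A 0 1 * (eA A 1 0 * eA A 2 2 - eA A 1 2 * eA A 2 0)
         + eA A 0 2 * (eA A 1 0 * eA A 2 1 - eA A 1 1 * eA A 2 0).
Proof. by rewrite det33 !eAE. Qed.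

Lemma det3_mul (A : 'M[R]_3) p q r :
  mink (boxtimes (A *m p) (A *m q)) (A *m r) = \det A * mink (boxtimes p q) r.
Proof.
rewrite /mink /boxtimes !cE !cM0 !cM1 !cM2 detE; ring.
Qed.

End G.

Local Notation lift := Defs.lift.
Local Notation act := Defs.act.

Section H.
Variable R : realType.
Section EE.
Local Open Scope ereal_scope.

Definition hE (r k : R) (e : \bar R) : \bar R := e * r%:E + k%:E.

Lemma hE_homo r k : (0 < r)%R -> {homo hE r k : x y / x <= y}.
Proof. by move=> r0 x y xy; rewrite /hE leeD2r // lee_wpmul2r // lee_fin ltW. Qed.

Lemma hE_comp r k s m e : (0 < r)%R -> (0 < s)%R ->
  hE r k (hE s m e) = hE (s * r) (m * r + k) e.
Proof.
move=> r0 s0; rewrite /hE; case: e => [x| |] /=.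
- by congr EFin; ring.
- by rewrite !gt0_mulye ?lte_fin ?mulr_gt0.
- by rewrite !gt0_mulNye ?lte_fin ?mulr_gt0.
Qed.

Lemma hE_cancel r k : (0 < r)%R -> cancel (hE r k) (hE r^-1 (- k * r^-1)).
Proof.
move=> r0 e; rewrite hE_comp ?invr_gt0 //.
have -> : (r * r^-1 = 1)%R by rewrite divff ?gt_eqF.
have -> : (k * r^-1 + - k * r^-1 = 0)%R by rewrite mulNr addrN.
by rewrite /hE mule1 adde0.
Qed.

Lemma hE_cancel' r k : (0 < r)%R -> cancel (hE r^-1 (- k * r^-1)) (hE r k).
Proof.
move=> r0 e; rewrite hE_comp ?invr_gt0 //.
have -> : (r^-1 * r = 1)%R by rewrite mulVf ?gt_eqF.
have -> : (- k * r^-1 * r + k = 0)%R by rewrite mulrVK ?unitfE ?gt_eqF // addNr.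
by rewrite /hE mule1 adde0.
Qed.

Lemma hE_diff r k P M : (0 < r)%R -> hE r k P - hE r k M = (P - M) * r%:E.
Proof.
move=> r0; rewrite /hE; case: P => [p| |]; case: M => [m| |] /=;
  rewrite ?gt0_mulye ?gt0_mulNye ?lte_fin //=.
by congr EFin; ring.
Qed.

Lemma sup_bij (h g : \bar R -> \bar R) (S : set (\bar R)) :
  {homo h : x y / x <= y} -> {homo g : x y / x <= y} -> cancel h g -> cancel g h ->
  ereal_sup (h @` S) = h (ereal_sup S).
Proof.
move=> hh hg hgK ghK; apply/eqP; rewrite eq_le; apply/andP; split.
  by apply/ereal_supP => _ [x Sx <-]; apply: hh; exact: ereal_sup_ubound.
rewrite -[X in _ <= X]ghK; apply: hh; apply/ereal_supP => y Sy.
by rewrite -(hgK y); apply: hg; apply: ereal_sup_ubound; exists y.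
Qed.

Lemma inf_bij (h g : \bar R -> \bar R) (S : set (\bar R)) :
  {homo h : x y / x <= y} -> {homo g : x y / x <= y} -> cancel h g -> cancel g h ->
  ereal_inf (h @` S) = h (ereal_inf S).
Proof.
move=> hh hg hgK ghK; apply/eqP; rewrite eq_le; apply/andP; split; last first.
  by apply/ereal_infP => _ [x Sx <-]; apply: hh; exact: ereal_inf_lbound.
rewrite -[X in X <= _]ghK; apply: hh; apply/ereal_infP => y Sy.
by rewrite -(hgK y); apply: hg; apply: ereal_inf_lbound; exists y.
Qed.
End EE.
Implicit Types (x y p q r : 'cV[R]_3).

Lemma minkDl p q r : mink (p + q) r = mink p r + mink q r.
Proof. rewrite /mink !cE; ring. Qed.
Lemma minkBl p q r : mink (p - q) r = mink p r - mink q r.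
Proof. rewrite /mink !cE; ring. Qed.
Lemma minkNl p r : mink (- p) r = - mink p r.
Proof. rewrite /mink !cE; ring. Qed.
Lemma minkZr p (k : R) r : mink p (k *: r) = k * mink p r.
Proof. rewrite /mink !cE; ring. Qed.

Lemma mink_inj p q : (forall r, mink p r = mink q r) -> p = q.
Proof.
move=> H; apply: vec3_ext.
- by have := H (vec3 1 0 0); rewrite /mink !cE => h; lra.
- by have := H (vec3 0 1 0); rewrite /mink !cE => h; lra.
- by have := H (vec3 0 0 1); rewrite /mink !cE => h; lra.
Qed.

Lemma liftE (e : R * R) : (c0 (lift e) = 1) * (c1 (lift e) = e.1) * (c2 (lift e) = e.2).
Proof. by rewrite /lift !cE. Qed.

Lemma liftPi x : c0 x != 0 -> lift (Pi x) = (c0 x)^-1 *: x.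
Proof.
move=> h; apply: vec3_ext; rewrite ?liftE /Pi !cE /=.
- by rewrite mulVf.
- by rewrite mulrC.
- by rewrite mulrC.
Qed.

Lemma PiZ (k : R) x : k != 0 -> Pi (k *: x) = Pi x.
Proof.
move=> hk; rewrite /Pi !cE; congr pair; by rewrite invfM mulrACA divff // mul1r.
Qed.

Lemma PiLift (e : R * R) : Pi (lift e) = e.
Proof. by rewrite /Pi ?liftE !divr1; case: e. Qed.

Lemma c0_0 : c0 (0 : 'cV[R]_3) = 0. Proof. by rewrite /c0 mxE. Qed.
Lemma c1_0 : c1 (0 : 'cV[R]_3) = 0. Proof. by rewrite /c1 mxE. Qed.
Lemma c2_0 : c2 (0 : 'cV[R]_3) = 0. Proof. by rewrite /c2 mxE. Qed.

Lemma mink_lift (e : R * R) : mink (lift e) (lift e) = sqnorm e - 1.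
Proof. rewrite /mink ?liftE /sqnorm; ring. Qed.

Lemma sqnorm_Pi x : c0 x != 0 -> sqnorm (Pi x) = 1 + mink x x / c0 x ^+ 2.
Proof. by move=> h; rewrite /sqnorm /Pi /mink /=; field. Qed.

Section WithA.
Variable A : 'M[R]_3.
Hypothesis hA : O0_12 A.
Let B := invmx A.

Lemma unitA : A \in unitmx.
Proof. by case: hA => _ d _; rewrite unitmxE d unitr1. Qed.
Lemma ABK p : A *m (B *m p) = p.
Proof. by rewrite mulmxA mulmxV ?unitA // mul1mx. Qed.
Lemma BAK p : B *m (A *m p) = p.
Proof. by rewrite mulmxA mulVmx ?unitA // mul1mx. Qed.
Lemma minkA x y : mink (A *m x) (A *m y) = mink x y.
Proof. by case: hA. Qed.
Lemma minkAB p y : mink p (A *m y) = mink (B *m p) y.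
Proof. by rewrite -{1}(ABK p) minkA. Qed.
Lemma minkBB x y : mink (B *m x) (B *m y) = mink x y.
Proof. by rewrite -minkA !ABK. Qed.

Lemma lam_pos (e : R * R) : sqnorm e <= 1 -> 0 < c0 (A *m lift e).
Proof.
move=> he.
have h1 : mink (A *m vec3 1 0 0) (A *m vec3 1 0 0) = -1.
  by rewrite minkA /mink !cE; ring.
have h2 : mink (A *m lift e) (A *m vec3 1 0 0) = -1.
  by rewrite minkA /mink !cE ?liftE; ring.
have h3 : mink (A *m lift e) (A *m lift e) = sqnorm e - 1 by rewrite minkA mink_lift.
have h4 : 0 < c0 (A *m vec3 1 0 0).
  rewrite cM0 !cE !mulr0 !addr0 mulr1 /eA.
  have -> : (inord 0 : 'I_3) = ord0 by apply/val_inj; rewrite /= inordK.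
  by case: hA.
move: h1 h2 h3 h4; rewrite /mink.
set x0 := c0 (A *m lift e); set x1 := c1 (A *m lift e); set x2 := c2 (A *m lift e).
set a0 := c0 (A *m vec3 1 0 0); set a1 := c1 (A *m vec3 1 0 0); set a2 := c2 (A *m vec3 1 0 0).
move=> h1 h2 h3 h4.
have cs : (x1 * a1 + x2 * a2) ^+ 2 <= (x1 ^+ 2 + x2 ^+ 2) * (a1 ^+ 2 + a2 ^+ 2).
  have : 0 <= (x1 * a2 - x2 * a1) ^+ 2 by apply: sqr_ge0.
  move=> h; nra.
have hX : x1 ^+ 2 + x2 ^+ 2 <= x0 ^+ 2 by nra.
have hAa : a1 ^+ 2 + a2 ^+ 2 = a0 ^+ 2 - 1 by nra.
have hs : x1 * a1 + x2 * a2 = x0 * a0 - 1 by nra.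
rewrite hs hAa in cs.
have hA0 : 0 <= a0 ^+ 2 - 1 by rewrite -hAa; nra.
have : (x1 ^+ 2 + x2 ^+ 2) * (a0 ^+ 2 - 1) <= x0 ^+ 2 * (a0 ^+ 2 - 1).
  by apply: ler_wpM2r.
move=> h5; nra.
Qed.

Lemma lam_neq0 (e : R * R) : sqnorm e <= 1 -> c0 (A *m lift e) != 0.
Proof. by move=> he; rewrite gt_eqF // lam_pos. Qed.

Lemma cB_neq0 (e : R * R) : sqnorm e <= 1 -> c0 (B *m lift e) != 0.
Proof.
move=> he; apply/eqP => h0.
have hm : mink (B *m lift e) (B *m lift e) = sqnorm e - 1 by rewrite minkBB mink_lift.
move: hm; rewrite /mink h0 => hm.
have h1 : c1 (B *m lift e) = 0 by nra.
have h2 : c2 (B *m lift e) = 0 by nra.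
have h : B *m lift e = 0 by apply: vec3_ext; rewrite ?c0_0 ?c1_0 ?c2_0.
have := ABK (lift e); rewrite h mulmx0 => /(congr1 (@c0 R)).
by rewrite c0_0 ?liftE => /eqP; rewrite eq_sym oner_eq0.
Qed.

Lemma actBA (e : R * R) : sqnorm e <= 1 -> act B (act A e) = e.
Proof.
move=> he; rewrite /act liftPi ?lam_neq0 // -scalemxAr BAK PiZ ?PiLift //.
by rewrite invr_eq0 lam_neq0.
Qed.

Lemma actAB (e : R * R) : sqnorm e <= 1 -> act A (act B e) = e.
Proof.
move=> he; rewrite /act liftPi ?cB_neq0 // -scalemxAr ABK PiZ ?PiLift //.
by rewrite invr_eq0 cB_neq0.
Qed.

Lemma sqnorm_actA (e : R * R) : sqnorm e <= 1 ->
  sqnorm (act A e) = 1 + (sqnorm e - 1) / c0 (A *m lift e) ^+ 2.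
Proof. by move=> he; rewrite /act sqnorm_Pi ?lam_neq0 // minkA mink_lift. Qed.

Lemma sqnorm_actB (e : R * R) : sqnorm e <= 1 ->
  sqnorm (act B e) = 1 + (sqnorm e - 1) / c0 (B *m lift e) ^+ 2.
Proof. by move=> he; rewrite /act sqnorm_Pi ?cB_neq0 // minkBB mink_lift. Qed.

Lemma S1_le (e : R * R) : S1 e -> sqnorm e <= 1.
Proof. by rewrite /S1 /= => ->. Qed.
Lemma D2_le (e : R * R) : D2 e -> sqnorm e <= 1.
Proof. by rewrite /D2 /= => /ltW. Qed.

Lemma S1_actA e : S1 e -> S1 (act A e).
Proof. move=> h; rewrite /S1 /= sqnorm_actA ?S1_le //; move: h; rewrite /S1 /= => ->.
by rewrite subrr mul0r addr0. Qed.
Lemma S1_actB e : S1 e -> S1 (act B e).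
Proof. move=> h; rewrite /S1 /= sqnorm_actB ?S1_le //; move: h; rewrite /S1 /= => ->.
by rewrite subrr mul0r addr0. Qed.

Lemma D2_aux (s c : R) : s < 1 -> c != 0 -> 1 + (s - 1) / c ^+ 2 < 1.
Proof.
move=> hs hc.
have hi : 0 < (c ^+ 2)^-1 by rewrite invr_gt0 lt0r sqr_ge0 sqrf_eq0 hc.
nra.
Qed.

Lemma D2_actA e : D2 e -> D2 (act A e).
Proof. move=> h; rewrite /D2 /= sqnorm_actA ?D2_le //; apply: D2_aux; [exact: h | exact: lam_neq0 (D2_le _ h)]. Qed.
Lemma D2_actB e : D2 e -> D2 (act B e).
Proof. move=> h; rewrite /D2 /= sqnorm_actB ?D2_le //; apply: D2_aux; [exact: h | exact: cB_neq0 (D2_le _ h)]. Qed.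


Lemma cross_key (z : R * R) : S1 z ->
  c1 (A *m lift z) * c2 (A *m vec3 0 (- z.2) z.1)
  - c2 (A *m lift z) * c1 (A *m vec3 0 (- z.2) z.1) = c0 (A *m lift z).
Proof.
move=> hz.
have hs : z.1 ^+ 2 + z.2 ^+ 2 = 1 by exact: hz.
have hb : boxtimes (lift z) (vec3 0 (- z.2) z.1) = - lift z.
  apply: vec3_ext; rewrite /boxtimes !cE ?liftE.
  - by rewrite -hs; ring.
  - ring.
  - ring.
have key : boxtimes (A *m lift z) (A *m vec3 0 (- z.2) z.1) = - (A *m lift z).
  apply: mink_inj => p.
  rewrite -(ABK p) det3_mul.
  have -> : \det A = 1 by case: hA.
  by rewrite mul1r hb !minkNl minkA.
move/(congr1 (@c0 R)): key; rewrite /boxtimes !cE => h.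
by rewrite -[LHS]opprK h opprK.
Qed.

Variable v : 'cV[R]_3.
Variable X : vfield R.
Hypothesis hXt : tangent X.

Lemma phi_add (P Q : vfield R) w : phi (vf_add P Q) w = phi P w + phi Q w.
Proof. rewrite /phi /vf_add /=; ring. Qed.

Lemma phi_Killing w : S1 w -> phi (Killing v) w = mink v (lift w).
Proof.
move=> hw; have hs : w.1 ^+ 2 + w.2 ^+ 2 = 1 by exact: hw.
rewrite /phi /Killing /dPi /boxtimes /mink !cE ?liftE /=.
transitivity (- (w.1 ^+ 2 + w.2 ^+ 2) * c0 v + c1 v * w.1 + c2 v * w.2).
  by field.
by rewrite hs; ring.
Qed.

Lemma phi_push z : S1 z -> phi (vf_push A X) (act A z) = phi X z / c0 (A *m lift z).
Proof.
move=> hz.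
have hs : z.1 ^+ 2 + z.2 ^+ 2 = 1 by exact: hz.
have ht := hXt z hz.
have k := cross_key z hz.
have hx := lam_neq0 z (S1_le _ hz).
rewrite {1}/phi /vf_push /=.
rewrite actBA ?S1_le //.
set u := X z.
have hu : vec3 0 u.1 u.2 = phi X z *: vec3 0 (- z.2) z.1.
  apply: vec3_ext; rewrite !cE /phi -/u.
  - by rewrite mulr0.
  - apply/eqP; rewrite -subr_eq0.
    have -> : u.1 - (- u.1 * z.2 + u.2 * z.1) * - z.2
       = u.1 * (1 - (z.1 ^+ 2 + z.2 ^+ 2)) + z.1 * (u.1 * z.1 + u.2 * z.2) by ring.
    by rewrite hs ht subrr !mulr0 addr0.
  - apply/eqP; rewrite -subr_eq0.
    have -> : u.2 - (- u.1 * z.2 + u.2 * z.1) * z.1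
       = u.2 * (1 - (z.1 ^+ 2 + z.2 ^+ 2)) + z.2 * (u.1 * z.1 + u.2 * z.2) by ring.
    by rewrite hs ht subrr !mulr0 addr0.
rewrite /Dact -/u hu -scalemxAr /dPi /act /Pi /= !cE.
move: k hx.
set x := A *m lift z; set t := A *m vec3 0 (- z.2) z.1 => k hx.
transitivity (phi X z * (c1 x * c2 t - c2 x * c1 t) / c0 x ^+ 2); first by field.
by rewrite k; field.
Qed.

Definition ua (a : R * R * R) : 'cV[R]_3 := vec3 (- a.1.1) a.1.2 a.2.
Definition au (p : 'cV[R]_3) : R * R * R := ((- c0 p, c1 p), c2 p).
Lemma aff_mink a (e : R * R) : aff a e = mink (ua a) (lift e).
Proof. rewrite /aff /mink /ua !cE ?liftE; ring. Qed.
Lemma auK a : au (ua a) = a.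
Proof. by case: a => [[c b1] b2]; rewrite /au /ua !cE opprK. Qed.
Lemma uaK p : ua (au p) = p.
Proof. by apply: vec3_ext; rewrite /ua /au !cE ?opprK. Qed.

Definition T a := au (B *m (ua a - v)).
Definition Tinv a := au (A *m ua a + v).
Lemma TK a : T (Tinv a) = a.
Proof. by rewrite /T /Tinv uaK addrK BAK auK. Qed.
Lemma TinvK a : Tinv (T a) = a.
Proof. by rewrite /T /Tinv uaK ABK subrK auK. Qed.

Lemma aff_act a (e : R * R) : sqnorm e <= 1 ->
  aff a (act A e) = aff (T a) e / c0 (A *m lift e) + mink v (lift (act A e)).
Proof.
move=> he; rewrite !aff_mink /T uaK.
set L := lift (act A e).
have hL : L = (c0 (A *m lift e))^-1 *: (A *m lift e).
  by rewrite /L /act liftPi ?lam_neq0.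
transitivity (mink (ua a - v) L + mink v L); first by rewrite minkBl subrK.
by rewrite hL minkZr minkAB mulrC.
Qed.

Let Y := vf_add (vf_push A X) (Killing v).

Lemma cmp_le a z : S1 z -> (aff a (act A z) <= phi Y (act A z)) = (aff (T a) z <= phi X z).
Proof.
move=> hz; have hw := S1_actA z hz.
rewrite (aff_act a z (S1_le _ hz)) /Y phi_add (phi_push z hz) (phi_Killing _ hw).
by rewrite lerD2r ler_pM2r // invr_gt0 lam_pos // S1_le.
Qed.
Lemma cmp_ge a z : S1 z -> (phi Y (act A z) <= aff a (act A z)) = (phi X z <= aff (T a) z).
Proof.
move=> hz; have hw := S1_actA z hz.
rewrite (aff_act a z (S1_le _ hz)) /Y phi_add (phi_push z hz) (phi_Killing _ hw).
by rewrite lerD2r ler_pM2r // invr_gt0 lam_pos // S1_le.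
Qed.

Lemma CY_iff a : (forall w, S1 w -> aff a w <= phi Y w) <->
   (forall z, S1 z -> aff (T a) z <= phi X z).
Proof.
split => H z hz.
  by rewrite -cmp_le //; apply: H; apply: S1_actA.
by rewrite -(actAB z (S1_le _ hz)) cmp_le; [apply: H; apply: S1_actB | apply: S1_actB].
Qed.
Lemma CY'_iff a : (forall w, S1 w -> phi Y w <= aff a w) <->
   (forall z, S1 z -> phi X z <= aff (T a) z).
Proof.
split => H z hz.
  by rewrite -cmp_ge //; apply: H; apply: S1_actA.
by rewrite -(actAB z (S1_le _ hz)) cmp_ge; [apply: H; apply: S1_actB | apply: S1_actB].
Qed.

Lemma phi_minus_eq e : D2 e -> phi_minus Y (act A e) =
  hE (c0 (A *m lift e))^-1 (mink v (lift (act A e))) (phi_minus X e).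
Proof.
move=> he; set l := c0 (A *m lift e); set k := mink v (lift (act A e)).
have hl : 0 < l^-1 by rewrite invr_gt0 lam_pos // D2_le.
have hl' : 0 < l^-1^-1 by rewrite invr_gt0.
rewrite /phi_minus -(sup_bij _ _ _ (hE_homo _ k hl) (hE_homo _ (- k * l^-1^-1) hl')
   (hE_cancel _ k hl) (hE_cancel' _ k hl)).
congr ereal_sup; apply/seteqP; split.
  move=> _ [a Ha <-].
  exists (aff (T a) e)%:E; first by exists (T a) => //; apply/CY_iff.
  by rewrite /hE /= (aff_act a e (D2_le _ he)).
move=> _ [_ [a Ha <-] <-].
exists (Tinv a); first by apply/CY_iff; rewrite TK.
by rewrite /hE /= (aff_act _ e (D2_le _ he)) TK.
Qed.

Lemma phi_plus_eq e : D2 e -> phi_plus Y (act A e) =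
  hE (c0 (A *m lift e))^-1 (mink v (lift (act A e))) (phi_plus X e).
Proof.
move=> he; set l := c0 (A *m lift e); set k := mink v (lift (act A e)).
have hl : 0 < l^-1 by rewrite invr_gt0 lam_pos // D2_le.
have hl' : 0 < l^-1^-1 by rewrite invr_gt0.
rewrite /phi_plus -(inf_bij _ _ _ (hE_homo _ k hl) (hE_homo _ (- k * l^-1^-1) hl')
   (hE_cancel _ k hl) (hE_cancel' _ k hl)).
congr ereal_inf; apply/seteqP; split.
  move=> _ [a Ha <-].
  exists (aff (T a) e)%:E; first by exists (T a) => //; apply/CY'_iff.
  by rewrite /hE /= (aff_act a e (D2_le _ he)).
move=> _ [_ [a Ha <-] <-].
exists (Tinv a); first by apply/CY'_iff; rewrite TK.
by rewrite /hE /= (aff_act _ e (D2_le _ he)) TK.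
Qed.

Lemma FY e : D2 e ->
  ((phi_plus Y (act A e) - phi_minus Y (act A e)) *
      ((Num.sqrt (1 - sqnorm (act A e)))^-1)%:E)%E =
  ((phi_plus X e - phi_minus X e) * ((Num.sqrt (1 - sqnorm e))^-1)%:E)%E.
Proof.
move=> he; rewrite phi_plus_eq // phi_minus_eq //.
have hl := lam_pos e (D2_le _ he).
rewrite hE_diff ?invr_gt0 // -muleA -EFinM; congr (_ * _%:E)%E.
rewrite sqnorm_actA ?D2_le //.
have -> : 1 - (1 + (sqnorm e - 1) / c0 (A *m lift e) ^+ 2)
   = (1 - sqnorm e) * (c0 (A *m lift e))^-1 ^+ 2.
  by rewrite exprVn; field; rewrite gt_eqF.
have h1 : 0 <= 1 - sqnorm e by rewrite subr_ge0 D2_le.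
rewrite sqrtrM // sqrtr_sqr ger0_norm ?invr_ge0 ?ltW //.
have hl0 : c0 (A *m lift e) != 0 by rewrite gt_eqF.
by rewrite invfM invrK mulrCA mulVf // mulr1.
Qed.

Lemma width_eq : vf_width Y = vf_width X.
Proof.
rewrite /vf_width; congr ereal_sup; apply/seteqP; split.
  move=> _ [e he <-].
  exists (act B e); first exact: D2_actB.
  have h1 := FY (act B e) (D2_actB e he).
  rewrite (actAB e (D2_le _ he)) in h1.
  exact: (esym h1).
move=> _ [e he <-].
exists (act A e); first exact: D2_actA.
exact: (FY e he).
Qed.

End WithA.
End H.

Theorem lemma2p15 (R : realType) (X : vfield R)
  (hXc : {within @S1 R, continuous X}) (hXt : tangent X)
  (A : 'M[R]_3) (hA : O0_12 A) (v : 'cV[R]_3) :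
  vf_width (vf_add (vf_push A X) (Killing v)) = vf_width X.
Proof. exact: (@width_eq R A hA v X hXt). Qed.
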